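(* Let $P$ be a shortest path (a path of minimum length between its two end vertices) in a honeycomb toroidal graph $\mathrm{HTG}(m,n,\ell)$. Then all jump edges of $P$ are traversed in the same direction along $P$: either every jump edge of $P$ is traversed from its end $u_{m-1,j}$ to its end $u_{0,j+\ell}$, or every jump edge of $P$ is traversed from $u_{0,j+\ell}$ to $u_{m-1,j}$.
   Context: Honeycomb toroidal graph: let $m\ge 1$ be an integer, $n\ge 4$ an even integer, and $\ell$ an integer with $\ell\equiv m \pmod 2$. The graph $\mathrm{HTG}(m,n,\ell)$ has vertex set $\{u_{i,j}: 0\le i\le m-1,\ j\in\mathbb{Z}_n\}$ (second subscripts are taken modulo $n$; the vertices $u_{i,0},\dots,u_{i,n-1}$ form column $i$) and the following edges: vertical edges $u_{i,j}u_{i,j+1}$ for all $0\le i\le m-1$ and all $j$; flat edges $u_{i,j}u_{i+1,j}$ for $0\le i\le m-2$ and all $j$ with $i+j$ odd; jump edges $u_{m-1,j}u_{0,j+\ell}$ for all $j$ with $j\equiv m\pmod 2$. Only parameters for which this is a simple 3-regular graph are allowed (in particular, when $m=1$ one requires $\ell\not\equiv\pm1\pmod n$). For a jump edge $u_{m-1,j}u_{0,j+\ell}$ (with $j\equiv m\pmod 2$), $u_{m-1,j}$ is its column-$(m-1)$ end and $u_{0,j+\ell}$ its column-$0$ end, even when $m=1$. *)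

(* Defs.v *)
From mathcomp Require Import all_boot all_order all_algebra.
Set Implicit Arguments. Unset Strict Implicit. Unset Printing Implicit Defensive.
Import GRing.Theory Num.Theory.

(* Honeycomb toroidal graph HTG(m,n,l).  Vertex u_{i,j} is the pair (i,j)
   with i : 'I_m (column) and j : 'I_n (second subscript, taken mod n). *)
Definition htg_vertex (m n : nat) := ('I_m * 'I_n)%type.

Definition htg_vert (m n : nat) (x y : htg_vertex m n) : bool :=
  (x.1 == y.1) &&
  ((nat_of_ord y.2 == (x.2 + 1) %% n) || (nat_of_ord x.2 == (y.2 + 1) %% n)).

Definition htg_flat (m n : nat) (x y : htg_vertex m n) : bool :=
  [&& nat_of_ord y.1 == (x.1).+1, nat_of_ord x.2 == y.2 & odd (x.1 + x.2)].

(* jump edge u_{m-1,j} u_{0,j+l} with j = m (mod 2), traversed from its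
   column-(m-1) end x = u_{m-1,j} to its column-0 end y = u_{0,j+l}. *)
Definition htg_jump (m n : nat) (l : int) (x y : htg_vertex m n) : bool :=
  [&& nat_of_ord x.1 == m.-1, nat_of_ord y.1 == 0%N, odd x.2 == odd m &
      (n%:Z %| ((y.2)%:Z - (x.2)%:Z - l)%R)%Z].

Definition htg_is_jump (m n : nat) (l : int) (x y : htg_vertex m n) : bool :=
  htg_jump l x y || htg_jump l y x.

Definition htg_adj (m n : nat) (l : int) : rel (htg_vertex m n) :=
  fun x y => [|| htg_vert x y, htg_flat x y, htg_flat y x | htg_is_jump l x y].

(* admissible parameters: m >= 1, n >= 4 even, l = m (mod 2), and the graph
   is simple (the only obstruction: m = 1 and l = +-1 (mod n)). *)
Definition htg_params (m n : nat) (l : int) : Prop :=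
  [/\ (1 <= m)%N, (4 <= n)%N, ~~ odd n, (2 %| (l - m%:Z)%R)%Z &
      (m = 1%N -> ~~ (n%:Z %| (l - 1)%R)%Z /\ ~~ (n%:Z %| (l + 1)%R)%Z)].

Definition htg_path (m n : nat) (l : int) (x : htg_vertex m n) (p : seq (htg_vertex m n)) : bool :=
  path (htg_adj l) x p && uniq (x :: p).

Definition htg_shortest_path (m n : nat) (l : int) (x : htg_vertex m n) (p : seq (htg_vertex m n)) : Prop :=
  htg_path l x p /\
  forall q : seq (htg_vertex m n),
    path (htg_adj l) x q -> last x q = last x p -> (size p <= size q)%N.

(* Main.v *)
Require Import Defs.
From mathcomp Require Import all_boot all_order all_algebra.
From mathcomp Require Import zify.
Import GRing.Theory Num.Theory.

Section Walks.
Variables (m n : nat) (l : int).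
Notation V := (htg_vertex m n).
Notation adj := (@htg_adj m n l).

Definition short (x : V) (p : seq V) :=
  exists q, path adj x q /\ last x q = last x p /\ (size q < size p)%N.

Lemma short_cat x pre r : path adj x pre -> short (last x pre) r -> short x (pre ++ r).
Proof.
move=> Hp [q [Hq [Hl Hs]]]; exists (pre ++ q); split.
  by rewrite cat_path Hp.
split; first by rewrite !last_cat.
by rewrite !size_cat ltn_add2l.
Qed.

Definition nj (a b : V) := adj a b && ~~ htg_is_jump l a b.

Lemma jump_adj a b : htg_is_jump l a b -> adj a b.
Proof. by move=> H; rewrite /htg_adj H !orbT. Qed.

Variable proj : V -> V.
Hypothesis Pv : forall a b, htg_vert a b -> adj (proj a) (proj b).
Hypothesis Pf : forall a b, nat_of_ord a.2 = nat_of_ord b.2 -> proj a = proj b.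

Lemma proj_walk s v : path nj v s ->
  exists q, [/\ path adj (proj v) q, last (proj v) q = proj (last v s) & (size q <= size s)%N].
Proof.
elim: s v => [|w s IH] v /=; first by exists [::].
case/andP=> /andP [Hadj Hnj] Hs.
have [q [Hq Hl Hsz]] := IH _ Hs.
move: Hadj; rewrite /htg_adj (negbTE Hnj) orbF.
case/or3P=> H.
- exists (proj w :: q); split => //=; first by rewrite Hq andbT; apply: Pv.
- have -> : proj v = proj w.
    by apply: Pf; case/and3P: H => _ /eqP -> _.
  by exists q; split => //; apply: leqW.
- have -> : proj v = proj w.
    by apply: Pf; case/and3P: H => _ /eqP -> _.
  by exists q; split => //; apply: leqW.
Qed.

Variable J : rel V.
Hypothesis J1 : forall a b, J a b -> htg_is_jump l a b.
Hypothesis J2 : forall a b, htg_is_jump l a b -> J a b || J b a.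
Hypothesis Jp : forall a b, J a b -> proj b = a.

Lemma lemC p : forall y, path adj y p ->
  (exists a b, (a, b) \in zip (y :: p) p /\ J b a) ->
  forall x0 y0 s, J x0 y0 -> path nj y0 s -> last y0 s = y ->
  short x0 (y0 :: s ++ p).
Proof.
elim: p => [|z p IH] y /=; first by move=> _ [a [b []]].
case/andP=> Hyz Hp [a [b [Hin Hab]]] x0 y0 s HJ0 Hs Hl.
have Hrest : J z y = false -> exists a b, (a, b) \in zip (z :: p) p /\ J b a.
  move=> Jzy; exists a, b; split => //.
  move: Hin; rewrite in_cons => /orP [/eqP [Ea Eb]|] //.
  by move: Hab; rewrite Ea Eb Jzy.
case Jzy: (J z y).
  have [q [Hq Hql Hqs]] := proj_walk _ _ Hs.
  rewrite (Jp _ _ HJ0) Hl (Jp _ _ Jzy) in Hq Hql.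
  exists (q ++ p); split; first by rewrite cat_path Hq Hql.
  split; first by rewrite last_cat Hql /= last_cat Hl.
  rewrite size_cat /= size_cat /=; lia.
case Hj: (htg_is_jump l y z).
  have Jyz : J y z by move: (J2 _ _ Hj); rewrite Jzy orbF.
  have := IH z Hp (Hrest Jzy) y z [::] Jyz erefl erefl.
  rewrite /= => Hsh.
  rewrite -cat_cons; apply: short_cat; last by rewrite /= Hl.
  rewrite /= jump_adj ?(J1 _ _ HJ0) //=.
  by apply: sub_path Hs => u v /andP [].
have := IH z Hp (Hrest Jzy) x0 y0 (rcons s z) HJ0.
rewrite rcons_path Hs Hl /nj Hyz Hj last_rcons cat_rcons.
by apply.
Qed.

End Walks.

Lemma mainD m n l (proj1 proj2 : htg_vertex m n -> htg_vertex m n)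
  (Pv1 : forall a b, htg_vert a b -> htg_adj l (proj1 a) (proj1 b))
  (Pf1 : forall a b, nat_of_ord a.2 = nat_of_ord b.2 -> proj1 a = proj1 b)
  (Jp1 : forall a b, htg_jump l a b -> proj1 b = a)
  (Pv2 : forall a b, htg_vert a b -> htg_adj l (proj2 a) (proj2 b))
  (Pf2 : forall a b, nat_of_ord a.2 = nat_of_ord b.2 -> proj2 a = proj2 b)
  (Jp2 : forall a b, htg_jump l b a -> proj2 b = a) :
  forall (p : seq (htg_vertex m n)) (x : htg_vertex m n), path (htg_adj l) x p ->
  (exists a b, (a, b) \in zip (x :: p) p /\ htg_jump l a b /\ ~~ htg_jump l b a) ->
  (exists a b, (a, b) \in zip (x :: p) p /\ htg_jump l b a /\ ~~ htg_jump l a b) ->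
  @short m n l x p.
Proof.
elim=> [|y p IH] x /=; first by move=> _ [a [b []]].
case/andP=> Hxy Hp [a [b [Hin [Hab Hba]]]] [c [d [Hin' [Hdc Hcd]]]].
case Jxy: (htg_jump l x y).
  apply: (@lemC m n l proj1 Pv1 Pf1 (htg_jump l) _ _ Jp1 p y Hp _ x y [::]) => //.
  - by move=> u v H; rewrite /htg_is_jump H.
  - exists c, d; split => //.
    move: Hin'; rewrite in_cons => /orP [/eqP [E1 E2]|] //.
    by move: Hcd; rewrite E1 E2 Jxy.
case Jyx: (htg_jump l y x).
  apply: (@lemC m n l proj2 Pv2 Pf2 (fun u v => htg_jump l v u) _ _ Jp2 p y Hp _ x y [::]) => //.
  - by move=> u v H; rewrite /htg_is_jump H orbT.
  - by move=> u v; rewrite /htg_is_jump orbC.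
  - exists a, b; split => //.
    move: Hin; rewrite in_cons => /orP [/eqP [E1 E2]|] //.
    by move: Hba; rewrite E1 E2 Jyx.
have := IH y Hp.
have H1 : exists a b, (a, b) \in zip (y :: p) p /\ htg_jump l a b /\ ~~ htg_jump l b a.
  exists a, b; split => //.
  move: Hin; rewrite in_cons => /orP [/eqP [E1 E2]|] //.
  by move: Hab; rewrite E1 E2 Jxy.
have H2 : exists a b, (a, b) \in zip (y :: p) p /\ htg_jump l b a /\ ~~ htg_jump l a b.
  exists c, d; split => //.
  move: Hin'; rewrite in_cons => /orP [/eqP [E1 E2]|] //.
  by move: Hdc; rewrite E1 E2 Jyx.
move=> /(_ H1 H2) Hs.
have -> : y :: p = [:: y] ++ p by [].
by apply: short_cat => //=; rewrite Hxy.
Qed.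

Definition prj m n (Hn : (0 < n)%N) (c : 'I_m) (t : nat) (v : htg_vertex m n) :
  htg_vertex m n := (c, Ordinal (ltn_pmod (v.2 + t) Hn)).

Lemma prj_vert m n l Hn c t (a b : htg_vertex m n) :
  htg_vert a b -> htg_adj l (@prj m n Hn c t a) (@prj m n Hn c t b).
Proof.
move=> /andP [_ H]; rewrite /htg_adj; apply/orP; left.
rewrite /htg_vert /= eqxx /=.
case/orP: H => /eqP H; apply/orP; [left|right]; rewrite H modnDml modnDml;
  by rewrite addnAC.
Qed.

Lemma prj_flat m n Hn c t (a b : htg_vertex m n) :
  nat_of_ord a.2 = nat_of_ord b.2 -> @prj m n Hn c t a = @prj m n Hn c t b.
Proof. by move=> H; rewrite /prj; congr pair; apply: val_inj => /=; rewrite H. Qed.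

Lemma keymod (n a b : nat) : (a < n)%N ->
  (n%:Z %| (b%:Z - a%:Z)%R)%Z -> a = (b %% n)%N.
Proof.
move=> Ha; rewrite -eqz_mod_dvd => /eqP H.
move: H; rewrite !modz_nat => -[] ->; by rewrite modn_small.
Qed.

Lemma exists_t (n : nat) (k : int) : (0 < n)%N -> exists t : nat, (n%:Z %| (t%:Z + k)%R)%Z.
Proof.
move=> Hn.
have Hge : (0 <= ((- k) %% n)%Z)%R by apply: modz_ge0; rewrite eqz_nat -lt0n.
case E: ((- k) %% n)%Z Hge => [t|t] // _.
exists t; rewrite -E.
have := modz_mod (- k) n; move/eqP; rewrite eqz_mod_dvd.
by rewrite opprK.
Qed.

Theorem lemma6p1 (m n : nat) (l : int) (x : htg_vertex m n) (p : seq (htg_vertex m n)) :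
  htg_params m n l ->
  htg_shortest_path l x p ->
  (forall a b, (a, b) \in zip (x :: p) p -> htg_is_jump l a b -> htg_jump l a b) \/
  (forall a b, (a, b) \in zip (x :: p) p -> htg_is_jump l a b -> htg_jump l b a).
Proof.
case=> Hm Hn4 _ _ _ [/andP [Hpath _] Hmin].
have Hn : (0 < n)%N by apply: leq_trans Hn4.
have Hm' : (m.-1 < m)%N by rewrite ltn_predL.
have [t1 Ht1] := @exists_t n l Hn.
have [t0 Ht0] := @exists_t n (- l) Hn.
pose c1 : 'I_m := Ordinal Hm'.
pose c0 : 'I_m := Ordinal Hm.
have Jp1 : forall a b, htg_jump l a b -> @prj m n Hn c1 t1 b = a.
  move=> [a1 a2] [b1 b2] /and4P [/eqP Ha1 _ _ Hd]; rewrite /prj /=.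
  congr pair; first by apply: val_inj.
  apply: val_inj => /=; symmetry; apply: keymod => //.
  have -> : ((b2 + t1)%N%:Z - a2%:Z = (b2%:Z - a2%:Z - l) + (t1%:Z + l))%R by lia.
  by rewrite rpredD.
have Jp2 : forall a b, htg_jump l b a -> @prj m n Hn c0 t0 b = a.
  move=> [a1 a2] [b1 b2] /and4P [_ /eqP Ha1 _ Hd]; rewrite /prj /=.
  congr pair; first by apply: val_inj.
  apply: val_inj => /=; symmetry; apply: keymod => //.
  have -> : ((b2 + t0)%N%:Z - a2%:Z = - (a2%:Z - b2%:Z - l) + (t0%:Z + - l))%R by lia.
  by rewrite rpredD ?rpredN.
case: (boolP (all (fun ab => htg_is_jump l ab.1 ab.2 ==> htg_jump l ab.1 ab.2) (zip (x::p) p))) => [A|A].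
  by left => a b Hin Hj; have := allP A _ Hin; rewrite /= Hj.
case: (boolP (all (fun ab => htg_is_jump l ab.1 ab.2 ==> htg_jump l ab.2 ab.1) (zip (x::p) p))) => [B|B].
  by right => a b Hin Hj; have := allP B _ Hin; rewrite /= Hj.
exfalso.
move/allPn: A => [[a b] Hin]; rewrite /= negb_imply => /andP [Hj Hn1].
move/allPn: B => [[c d] Hin']; rewrite /= negb_imply => /andP [Hj' Hn2].
have ex1 : exists a b, (a, b) \in zip (x :: p) p /\ htg_jump l a b /\ ~~ htg_jump l b a.
  exists c, d; split => //; split => //.
  by move: Hj'; rewrite /htg_is_jump (negbTE Hn2) orbF.
have ex2 : exists a b, (a, b) \in zip (x :: p) p /\ htg_jump l b a /\ ~~ htg_jump l a b.
  exists a, b; split => //; split => //.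
  by move: Hj; rewrite /htg_is_jump (negbTE Hn1).
have [] := @mainD m n l (@prj m n Hn c1 t1) (@prj m n Hn c0 t0)
  (@prj_vert m n l Hn c1 t1) (@prj_flat m n Hn c1 t1) Jp1
  (@prj_vert m n l Hn c0 t0) (@prj_flat m n Hn c0 t0) Jp2 p x Hpath ex1 ex2.
move=> q [Hq [Hlq Hsz]].
have := Hmin q Hq Hlq; lia.
Qed.
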